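(* Let $k\ge 0$ be an integer and let $G$ be a $(k+1)$-edge-connected graph with $m$ edges. Then \[f_2(M(G))\leq m-\frac{3(k+1)}{2}.\]
   Context: $M(G)$ is the cycle matroid of $G=(V,E)$: the matroid on $E$ with rank function $rk(A)=|V|-k(A)$, where $k(A)$ is the number of components of the spanning subgraph $(V,A)$; let $r=rk(E)$. A flat of $M(G)$ is a set $F\subseteq E$ with $F=\{e\in E: rk(F\cup\{e\})=rk(F)\}$, and $f_2(M(G))=\max\{|F|: F\text{ a flat of } M(G),\ rk(F)=r-2\}$. *)

(* Defs.v *)
(* A (multi)graph G = (V, E) is given by finite types V, E
   and endpoint maps src tgt : E -> V (loops and parallel edges allowed). *)
From mathcomp Require Import all_boot all_order all_algebra.
Set Implicit Arguments. Unset Strict Implicit. Unset Printing Implicit Defensive.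

Section Graph.
Variables (V E : finType) (src tgt : E -> V).

Definition adj (A : {set E}) : rel V := fun x y =>
  [exists e in A, ((src e == x) && (tgt e == y)) || ((src e == y) && (tgt e == x))].

Definition ncomp (A : {set E}) : nat := n_comp (adj A) [pred x : V | true].

(* rank function of the cycle matroid M(G): rk(A) = |V| - k(A) *)
Definition rk (A : {set E}) : nat := #|V| - ncomp A.

Definition rkE : nat := rk [set: E].

Definition is_flat (F : {set E}) : bool :=
  F == [set e | rk (e |: F) == rk F].

Definition f2 : nat := \max_(F : {set E} | is_flat F && (rk F + 2 == rkE)) #|F|.

Definition connectedG (A : {set E}) : bool := ncomp A == 1.

Definition edge_connected (l : nat) : Prop :=
  forall S : {set E}, #|S| < l -> connectedG (~: S).

End Graph.

(* Main.v *)
Require Import Defs.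
From mathcomp Require Import all_boot all_order all_algebra.
From mathcomp Require Import zify lra.
Import Order.TTheory GRing.Theory Num.Theory.
Set Implicit Arguments. Unset Strict Implicit. Unset Printing Implicit Defensive.
Section S.
Variables (V E : finType) (src tgt : E -> V).

Lemma adj_sym A : symmetric (adj src tgt A).
Proof.
move=> x y; rewrite /adj; apply/idP/idP => /existsP [e /andP [He1 He2]];
  apply/existsP; exists e; by rewrite He1 orbC.
Qed.

Lemma csym A : connect_sym (adj src tgt A).
Proof. exact/sym_connect_sym/adj_sym. Qed.

Definition D F r := [set e | (fingraph.root (adj src tgt F) (src e) == r) != (fingraph.root (adj src tgt F) (tgt e) == r)].

Lemma D_notF F r e : e \in D F r -> e \notin F.
Proof.
rewrite inE; apply: contraL => eF.
have /(fingraph.rootP (csym F)) -> : connect (adj src tgt F) (src e) (tgt e).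
  by apply: connect1; apply/existsP; exists e; rewrite eF !eqxx.
by rewrite eqxx.
Qed.

Lemma D_big F k : (forall S : {set E}, #|S| < k -> connectedG src tgt (~: S)) ->
  forall r r', roots (adj src tgt F) r -> roots (adj src tgt F) r' -> r != r' ->
  k <= #|D F r|.
Proof.
move=> Hc r r' Hr Hr' Hne; rewrite leqNgt; apply/negP => /Hc.
rewrite /connectedG /ncomp => /eqP H1.
set a := adj src tgt (~: D F r).
have cl : closed a [pred v | fingraph.root (adj src tgt F) v == r].
  move=> x y /existsP [e /andP [He Hxy]].
  rewrite inE in He; rewrite /= .
  move: He; rewrite inE negbK => /eqP He.
  by case/orP: Hxy => /andP [/eqP <- /eqP <-].
have Cr : connect a r r'.
  apply/(fingraph.rootP (csym _)).
  have /card_le1_eqP : #|predI (roots a) [pred x : V | true]| <= 1.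
    by rewrite /n_comp_mem in H1; rewrite H1.
  apply; rewrite !inE /= andbT; exact: (roots_root (csym _) _).
have := closed_connect cl Cr; rewrite !inE.
move: Hr Hr'; rewrite /roots /= => /eqP -> /eqP ->.
by rewrite eqxx eq_sym (negbTE Hne).
Qed.

Lemma count_le F :
  \sum_(r in roots (adj src tgt F)) #|D F r| <= 2 * #|~: F|.
Proof.
under eq_bigr => r _ do rewrite -sum1_card big_mkcond /=.
rewrite exchange_big /= -sum1_card big_distrr /= [X in _ <= X]big_mkcond /=.
apply: leq_sum => e _.
rewrite inE; case: ifP => eF; last first.
  by rewrite big1 // => r _; case: ifP => // /D_notF; rewrite eF.
pose u := fingraph.root (adj src tgt F) (src e); pose v := fingraph.root (adj src tgt F) (tgt e).
apply: (@leq_trans (\sum_(r in roots (adj src tgt F)) (r \in [set u; v]) : nat)).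
  apply: leq_sum => r _; case: ifP => //; rewrite !inE -/u -/v.
  by rewrite ![r == _]eq_sym; case: (u == r); case: (v == r).
apply: (@leq_trans (\sum_r (r \in [set u; v]) : nat)).
  by rewrite [X in _ <= X](bigID (roots (adj src tgt F))) /= leq_addr.
rewrite muln1 -big_mkcondr /= sum1_card cards2.
by case: (u != v).
Qed.

Lemma ncomp_bound F k : (forall S : {set E}, #|S| < k -> connectedG src tgt (~: S)) ->
  2 <= ncomp src tgt F -> ncomp src tgt F * k <= 2 * #|~: F|.
Proof.
move=> Hc H2.
have Ec : ncomp src tgt F = #|roots (adj src tgt F)|.
  by rewrite /ncomp /n_comp_mem; apply: eq_card => x; rewrite !inE andbT.
rewrite Ec -sum_nat_const; apply: leq_trans (count_le F).
apply: leq_sum => r Hr.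
have [r' Hr' Hne] : exists2 r', roots (adj src tgt F) r' & r != r'.
  apply/exists_inP; apply: contraTT H2; rewrite negb_exists_in Ec => /forall_inP Hall.
  rewrite -ltnNge ltnS -(card1 r); apply: subset_leq_card; apply/subsetP => x Hx.
  by have := Hall x Hx; rewrite negbK inE eq_sym.
exact: D_big Hc r r' Hr Hr' Hne.
Qed.
End S.

Local Open Scope ring_scope.

Theorem lemma3p6 (V E : finType) (src tgt : E -> V) (k : nat) :
  edge_connected src tgt k.+1 ->
  (exists F : {set E}, is_flat src tgt F && (rk src tgt F + 2 == rkE src tgt)%N) ->
  ((f2 src tgt)%:R : rat) <= (#|E|)%:R - 3%:R * (k.+1)%:R / 2%:R.
Proof.
move=> Hc [F0 HF0].
have G1 : ncomp src tgt [set: E] = 1%N.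
  have := Hc set0; rewrite cards0 setC0 => /(_ isT) /eqP; done.
have [F HF ->] : {F : {set E} | is_flat src tgt F && (rk src tgt F + 2 == rkE src tgt)%N
     & f2 src tgt = #|F|}.
  rewrite /f2; apply: (eq_bigmax_cond (fun F : {set E} => #|F|)).
  by apply/card_gt0P; exists F0.
case/andP: HF => _ /eqP; rewrite /rkE /rk G1 => Hr.
have N3 : (3 <= ncomp src tgt F)%N by lia.
have Hb := ncomp_bound Hc (leq_trans (isT : (2 <= 3)%N) N3).
have Hcard := cardsC F.
have Hn : (3 * k.+1 <= 2 * #|~: F|)%N.
  by apply: leq_trans Hb; rewrite leq_mul2r N3 orbT.
have Hn' : (2 * #|F| + 3 * k.+1 <= 2 * #|E|)%N.
  lia.
have : ((2 * #|F| + 3 * k.+1)%N%:R <= (2 * #|E|)%N%:R :> rat) by rewrite ler_nat.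
rewrite !natrD !natrM => H.
lra.
Qed.
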